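(* Let $N\ge1$, $d_1,d_2,d_3,d_4\ge1$, $\kappa_1,\kappa_2\ge0$, and let $\{(U_i,V_i)\}_{i=1}^N$, $U_i(t)\in\mathbb C^{d_1\times d_2}$, $V_i(t)\in\mathbb C^{d_3\times d_4}$, be a solution of $\dot U_j=\frac{\kappa_1}{N}\sum_k(\langle V_j,V_k\rangle_FU_kU_j^\dagger U_j-\langle V_k,V_j\rangle_FU_jU_k^\dagger U_j)+\frac{\kappa_2}{N}\sum_k(\langle V_j,V_k\rangle_FU_jU_j^\dagger U_k-\langle V_k,V_j\rangle_FU_jU_k^\dagger U_j)$, $\dot V_j=\frac{\kappa_1}{N}\sum_k(\langle U_j,U_k\rangle_FV_kV_j^\dagger V_j-\langle U_k,U_j\rangle_FV_jV_k^\dagger V_j)+\frac{\kappa_2}{N}\sum_k(\langle U_j,U_k\rangle_FV_jV_j^\dagger V_k-\langle U_k,U_j\rangle_FV_jV_k^\dagger V_j)$. Then $\mathcal E(U,V):=1-\frac1{N^2}\sum_{i,j=1}^N\langle U_i,U_j\rangle_F\langle V_i,V_j\rangle_F$ satisfies $$\frac{d}{dt}\mathcal E=-\frac{\kappa_1}{N}\sum_{j=1}^N\Big\|\frac1N\sum_{i=1}^N\big(\langle V_j,V_i\rangle_FU_iU_j^\dagger-\langle V_i,V_j\rangle_FU_jU_i^\dagger\big)\Big\|_F^2-\frac{\kappa_1}{N}\sum_{j=1}^N\Big\|\frac1N\sum_{i=1}^N\big(\langle U_j,U_i\rangle_FV_iV_j^\dagger-\langle U_i,U_j\rangle_FV_jV_i^\dagger\big)\Big\|_F^2$$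 $$-\frac{\kappa_2}{N}\sum_{j=1}^N\Big\|\frac1N\sum_{i=1}^N\big(\langle V_j,V_i\rangle_FU_j^\dagger U_i-\langle V_i,V_j\rangle_FU_i^\dagger U_j\big)\Big\|_F^2-\frac{\kappa_2}{N}\sum_{j=1}^N\Big\|\frac1N\sum_{i=1}^N\big(\langle U_j,U_i\rangle_FV_j^\dagger V_i-\langle U_i,U_j\rangle_FV_i^\dagger V_j\big)\Big\|_F^2.$$ In particular $\mathcal E$ is non-increasing in time.
   Context: $\langle A,B\rangle_F=\mathrm{tr}(A^\dagger B)$ and $\|A\|_F=\sqrt{\langle A,A\rangle_F}$ for complex matrices; sums over $k$ run from $1$ to $N$. *)

(* Defs.v *)
From HB Require Import structures.
From mathcomp Require Import all_boot all_order all_algebra.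
From mathcomp Require Import complex.
From mathcomp Require Import all_classical all_reals all_analysis.
Set Implicit Arguments. Unset Strict Implicit. Unset Printing Implicit Defensive.
Import Order.TTheory GRing.Theory Num.Theory.
Local Open Scope ring_scope.

Definition adj (R : rcfType) (m n : nat) (A : 'M[R[i]]_(m, n)) : 'M[R[i]]_(n, m) :=
  (map_mx (@conjc R) A)^T.

Definition frob (R : rcfType) (m n : nat) (A B : 'M[R[i]]_(m, n)) : R[i] :=
  \tr (adj A *m B).

(* Frobenius norm ||A||_F = sqrt <A,A>_F  (<A,A>_F is real and >= 0). *)
Definition frob_norm (R : rcfType) (m n : nat) (A : 'M[R[i]]_(m, n)) : R :=
  Num.sqrt (complex.Re (frob A A)).

Definition cR (R : rcfType) (x : R) : R[i] := Complex x 0.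

Definition has_deriv_C (R : realType) (f : R -> R[i]) (t : R) (z : R[i]) : Prop :=
  is_derive t 1 (fun s => complex.Re (f s)) (complex.Re z) /\
  is_derive t 1 (fun s => complex.Im (f s)) (complex.Im z).

Definition has_deriv_mx (R : realType) (m n : nat) (f : R -> 'M[R[i]]_(m, n))
    (t : R) (D : 'M[R[i]]_(m, n)) : Prop :=
  forall (a : 'I_m) (b : 'I_n), has_deriv_C (fun s => f s a b) t (D a b).

(* Main.v *)
Require Import Defs.
From HB Require Import structures.
From mathcomp Require Import all_boot all_order all_algebra.
From mathcomp Require Import complex.
From mathcomp Require Import all_classical all_reals all_analysis.
From mathcomp Require Import ring lra.
Import Order.TTheory GRing.Theory Num.Theory.
Local Open Scope ring_scope.
Set Implicit Arguments. Unset Strict Implicit. Unset Printing Implicit Defensive.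


Section Alg.
Variable R : rcfType.
Local Notation C := R[i].
Local Notation cj := (@conjc R).

Lemma cadjE m n (A : 'M[C]_(m, n)) i j : adj A i j = cj (A j i).
Proof. by rewrite /adj !mxE. Qed.

Lemma cadjK m n (A : 'M[C]_(m, n)) : adj (adj A) = A.
Proof. by apply/matrixP => i j; rewrite !cadjE conjcK. Qed.

Lemma cadjD m n (A B : 'M[C]_(m, n)) : adj (A + B) = adj A + adj B.
Proof. by apply/matrixP => i j; rewrite /adj !mxE rmorphD. Qed.

Lemma cadjN m n (A : 'M[C]_(m, n)) : adj (- A) = - adj A.
Proof. by apply/matrixP => i j; rewrite /adj !mxE rmorphN. Qed.

Lemma cadjB m n (A B : 'M[C]_(m, n)) : adj (A - B) = adj A - adj B.
Proof. by rewrite cadjD cadjN. Qed.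

Lemma cadjZ m n c (A : 'M[C]_(m, n)) : adj (c *: A) = cj c *: adj A.
Proof. by apply/matrixP => i j; rewrite /adj !mxE rmorphM. Qed.

Lemma cadj_sum m n I (r : seq I) (F : I -> 'M[C]_(m, n)) :
  adj (\sum_(i <- r) F i) = \sum_(i <- r) adj (F i).
Proof.
elim: r => [|x r IH]; first by rewrite !big_nil; apply/matrixP => i j; rewrite cadjE !mxE conjc0.
by rewrite !big_cons cadjD IH.
Qed.

Lemma cadjM m n p (A : 'M[C]_(m, n)) (B : 'M[C]_(n, p)) : adj (A *m B) = adj B *m adj A.
Proof.
apply/matrixP => i j; rewrite cadjE !mxE rmorph_sum; apply: eq_bigr => k _.
by rewrite rmorphM !cadjE mulrC.
Qed.

Lemma frob_expand m n (A B : 'M[C]_(m, n)) :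
  frob A B = \sum_k \sum_l cj (A l k) * B l k.
Proof.
rewrite /frob /mxtrace; apply: eq_bigr => k _; rewrite mxE.
by apply: eq_bigr => l _; rewrite cadjE.
Qed.

Lemma frob_conj m n (A B : 'M[C]_(m, n)) : cj (frob A B) = frob B A.
Proof.
rewrite !frob_expand rmorph_sum; apply: eq_bigr => k _; rewrite rmorph_sum.
by apply: eq_bigr => l _; rewrite rmorphM /= conjcK mulrC.
Qed.

Lemma tr_conj n (A : 'M[C]_n) : cj (\tr A) = \tr (adj A).
Proof. by rewrite /mxtrace rmorph_sum; apply: eq_bigr => k _; rewrite cadjE. Qed.

Definition ssq m n (A : 'M[C]_(m, n)) : R :=
  \sum_k \sum_l (complex.Re (A l k) ^+ 2 + complex.Im (A l k) ^+ 2).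

Lemma cRE (x : R) : cR x = (x%:C)%C. Proof. by []. Qed.

Lemma frob_self m n (A : 'M[C]_(m, n)) : frob A A = cR (ssq A).
Proof.
rewrite frob_expand /ssq cRE rmorph_sum; apply: eq_bigr => k _; rewrite rmorph_sum.
apply: eq_bigr => l _; case: (A l k) => x y /=.
apply/eqP; rewrite eq_complex /=; apply/andP; split; apply/eqP; ring.
Qed.

Lemma ssq_ge0 m n (A : 'M[C]_(m, n)) : 0 <= ssq A.
Proof.
apply: sumr_ge0 => k _; apply: sumr_ge0 => l _.
by rewrite addr_ge0 // sqr_ge0.
Qed.

Lemma key_tr n (P : 'M[C]_n) :
  \tr ((adj P - P) *m P) + cj (\tr ((adj P - P) *m P)) = frob (adj P - P) (adj P - P).
Proof.
rewrite tr_conj cadjM cadjB cadjK /frob cadjB cadjK.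
rewrite !mulmxBl !mulmxBr !raddfB /=.
rewrite [\tr (P *m adj P)]mxtrace_mulC.
ring.
Qed.

End Alg.


Section Part.
Variable R : rcfType.
Local Notation C := R[i].
Local Notation cj := (@conjc R).

Lemma cRM (x y : R) : cR (x * y) = cR x * cR y. Proof. rewrite !cRE; exact: rmorphM. Qed.
Lemma cRD (x y : R) : cR (x + y) = cR x + cR y. Proof. rewrite !cRE; exact: rmorphD. Qed.
Lemma cRV (x : R) : cR (x^-1) = (cR x)^-1. Proof. rewrite !cRE; exact: fmorphV. Qed.
Lemma cR_nat n : cR (n%:R : R) = n%:R. Proof. rewrite !cRE; exact: rmorph_nat. Qed.
Lemma cR_sum I (r : seq I) (F : I -> R) : cR (\sum_(i <- r) F i) = \sum_(i <- r) cR (F i).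
Proof. rewrite cRE (eq_bigr (fun i => ((F i)%:C)%C)) //; exact: rmorph_sum. Qed.

Lemma partU (N d1 d2 d3 d4 : nat) (k1 k2 : R)
  (U : 'I_N -> 'M[C]_(d1, d2)) (V : 'I_N -> 'M[C]_(d3, d4)) (dU : 'I_N -> 'M[C]_(d1, d2))
  (hdU : forall j, dU j =
       (cR k1 / N%:R) *: \sum_(k < N)
           (frob (V j) (V k) *: (U k *m adj (U j) *m U j)
            - frob (V k) (V j) *: (U j *m adj (U k) *m U j))
      + (cR k2 / N%:R) *: \sum_(k < N)
           (frob (V j) (V k) *: (U j *m adj (U j) *m U k)
            - frob (V k) (V j) *: (U j *m adj (U k) *m U j))) :
  \sum_(i < N) \sum_(j < N) (frob (dU i) (U j) + frob (U i) (dU j)) * frob (V i) (V j)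
  = cR (k1 / N%:R * \sum_(j < N) ssq (\sum_(i < N)
              (frob (V j) (V i) *: (U i *m adj (U j))
               - frob (V i) (V j) *: (U j *m adj (U i))))
      + k2 / N%:R * \sum_(j < N) ssq (\sum_(i < N)
              (frob (V j) (V i) *: (adj (U j) *m U i)
               - frob (V i) (V j) *: (adj (U i) *m U j)))).
Proof.
set b := fun i j => frob (V i) (V j).
have hb i j : cj (b i j) = b j i by rewrite /b frob_conj.
pose P j := \sum_(i < N) b i j *: (U j *m adj (U i)).
pose Q j := \sum_(i < N) b i j *: (adj (U i) *m U j).
have hP j : adj (P j) - P j = \sum_(i < N) (b j i *: (U i *m adj (U j)) - b i j *: (U j *m adj (U i))).
  rewrite /P cadj_sum -sumrB; apply: eq_bigr => i _; by rewrite cadjZ cadjM cadjK hb.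
have hQ j : adj (Q j) - Q j = \sum_(i < N) (b j i *: (adj (U j) *m U i) - b i j *: (adj (U i) *m U j)).
  rewrite /Q cadj_sum -sumrB; apply: eq_bigr => i _; by rewrite cadjZ cadjM cadjK hb.
have hdU' j : dU j = (cR k1 / N%:R) *: ((adj (P j) - P j) *m U j)
     + (cR k2 / N%:R) *: (U j *m (adj (Q j) - Q j)).
  rewrite hdU hP hQ mulmx_suml mulmx_sumr; congr (_ *: _ + _ *: _); apply: eq_bigr => k _.
    by rewrite mulmxBl -!scalemxAl.
  by rewrite mulmxBr -!scalemxAr !mulmxA.
have hT j : \sum_(i < N) frob (U i) (dU j) * b i j =
    (cR k1 / N%:R) * \tr ((adj (P j) - P j) *m P j)
  + (cR k2 / N%:R) * \tr ((adj (Q j) - Q j) *m Q j).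
  pose W := \sum_(i < N) b i j *: adj (U i).
  have -> : \sum_(i < N) frob (U i) (dU j) * b i j = \tr (W *m dU j).
    rewrite /W mulmx_suml raddf_sum /=; apply: eq_bigr => i _.
    by rewrite -scalemxAl mxtraceZ mulrC.
  rewrite hdU' mulmxDr -!scalemxAr raddfD /= !mxtraceZ; congr (_ * _ + _ * _).
    rewrite mxtrace_mulC -mulmxA; congr (\tr (_ *m _)).
    by rewrite /W /P mulmx_sumr; apply: eq_bigr => i _; rewrite -scalemxAr.
  rewrite mulmxA [RHS]mxtrace_mulC; congr (\tr (_ *m _)).
  by rewrite /W /Q mulmx_suml; apply: eq_bigr => i _; rewrite -scalemxAl.
have hconjA : cj (cR k1 / N%:R) = cR k1 / N%:R.
  by rewrite rmorphM fmorphV rmorph_nat /= oppr0.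
have hconjB : cj (cR k2 / N%:R) = cR k2 / N%:R.
  by rewrite rmorphM fmorphV rmorph_nat /= oppr0.
pose X := \sum_(j < N) \sum_(i < N) frob (U i) (dU j) * b i j.
have e1 : \sum_(i < N) \sum_(j < N) frob (U i) (dU j) * b i j = X.
  by rewrite /X exchange_big.
have e2 : \sum_(i < N) \sum_(j < N) frob (dU i) (U j) * b i j = cj X.
  rewrite /X rmorph_sum; apply: eq_bigr => i _; rewrite rmorph_sum.
  by apply: eq_bigr => j _; rewrite rmorphM /= frob_conj hb.
have -> : \sum_(i < N) \sum_(j < N) (frob (dU i) (U j) + frob (U i) (dU j)) * frob (V i) (V j)
   = cj X + X.
  rewrite -e2 -e1 -big_split /=; apply: eq_bigr => i _.
  by rewrite -big_split /=; apply: eq_bigr => j _; rewrite mulrDl.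
rewrite /X rmorph_sum -big_split /=.
have hA x : cj (cR k1 / N%:R * x) = cR k1 / N%:R * cj x 
  by rewrite !rmorphM fmorphV rmorph_nat /= oppr0.
have hB x : cj (cR k2 / N%:R * x) = cR k2 / N%:R * cj x 
  by rewrite !rmorphM fmorphV rmorph_nat /= oppr0.
have hAB x y : cj (cR k1 / N%:R * x + cR k2 / N%:R * y) = cR k1 / N%:R * cj x + cR k2 / N%:R * cj y.
  by rewrite rmorphD !rmorphM fmorphV rmorph_nat /= oppr0.
under eq_bigr => j _ do rewrite hT hAB.
under eq_bigr => j _ do rewrite addrACA -!mulrDr !(addrC (cj _)) !key_tr !frob_self hP hQ.
rewrite cRD !cRM !cR_sum cRV cR_nat big_split /= -!mulr_sumr.
by [].
Qed.

End Part.


Section Der.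
Variable R : realType.
Local Notation C := R[i].
Local Notation cj := (@conjc R).
Implicit Types (f g : R -> C) (t : R) (z w : C).

Lemma hdC_eq f t z w : has_deriv_C f t z -> z = w -> has_deriv_C f t w.
Proof. by move=> h <-. Qed.

Lemma hdC_cst (c : C) t : has_deriv_C (fun _ => c) t 0.
Proof. by split; apply: is_derive_cst. Qed.

Lemma hdC_add f g t z w : has_deriv_C f t z -> has_deriv_C g t w ->
  has_deriv_C (fun s => f s + g s) t (z + w).
Proof.
move=> [hf1 hf2] [hg1 hg2]; split.
  have -> : (fun s => complex.Re (f s + g s)) = (fun s => complex.Re (f s)) + (fun s => complex.Re (g s)).
    by apply/funext => s; rewrite ?fctE /=; case: (f s) => ? ?; case: (g s).
  apply: (is_derive_eq (is_deriveD hf1 hg1)) || apply: (is_derive_eq (is_deriveD hf2 hg2)).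
  by case: z {hf1 hf2}; case: w {hg1 hg2}.
have -> : (fun s => complex.Im (f s + g s)) = (fun s => complex.Im (f s)) + (fun s => complex.Im (g s)).
  by apply/funext => s; rewrite ?fctE /=; case: (f s) => ? ?; case: (g s).
apply: (is_derive_eq (is_deriveD hf1 hg1)) || apply: (is_derive_eq (is_deriveD hf2 hg2)).
  by case: z {hf1 hf2}; case: w {hg1 hg2}.
Qed.

Lemma hdC_opp f t z : has_deriv_C f t z -> has_deriv_C (fun s => - f s) t (- z).
Proof.
move=> [hf1 hf2]; split.
  have -> : (fun s => complex.Re (- f s)) = - (fun s => complex.Re (f s)).
    by apply/funext => s; rewrite ?fctE /=; case: (f s).
  apply: (is_derive_eq (is_deriveN hf1)) || apply: (is_derive_eq (is_deriveN hf2)).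
  by case: z {hf1 hf2}.
have -> : (fun s => complex.Im (- f s)) = - (fun s => complex.Im (f s)).
  by apply/funext => s; rewrite ?fctE /=; case: (f s).
apply: (is_derive_eq (is_deriveN hf1)) || apply: (is_derive_eq (is_deriveN hf2)).
  by case: z {hf1 hf2}.
Qed.

Lemma hdC_sub f g t z w : has_deriv_C f t z -> has_deriv_C g t w ->
  has_deriv_C (fun s => f s - g s) t (z - w).
Proof. by move=> hf hg; apply: hdC_add => //; exact: hdC_opp. Qed.

Lemma hdC_mul f g t z w : has_deriv_C f t z -> has_deriv_C g t w ->
  has_deriv_C (fun s => f s * g s) t (z * g t + f t * w).
Proof.
move=> [hf1 hf2] [hg1 hg2]; split.
  have -> : (fun s => complex.Re (f s * g s)) =
     (fun s => complex.Re (f s)) * (fun s => complex.Re (g s))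
     - (fun s => complex.Im (f s)) * (fun s => complex.Im (g s)).
    by apply/funext => s; rewrite ?fctE /=; case: (f s) => ? ?; case: (g s).
  apply: (is_derive_eq (is_deriveB (is_deriveM hf1 hg1) (is_deriveM hf2 hg2))).
  rewrite /GRing.scale /=.
  case: z {hf1 hf2} => ? ?; case: w {hg1 hg2} => ? ?; case: (f t) => ? ?; case: (g t) => ? ? /=.
  ring.
have -> : (fun s => complex.Im (f s * g s)) =
   (fun s => complex.Re (f s)) * (fun s => complex.Im (g s))
   + (fun s => complex.Im (f s)) * (fun s => complex.Re (g s)).
  by apply/funext => s; rewrite ?fctE /=; case: (f s) => ? ?; case: (g s).
apply: (is_derive_eq (is_deriveD (is_deriveM hf1 hg2) (is_deriveM hf2 hg1))).
rewrite /GRing.scale /=.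
case: z {hf1 hf2} => ? ?; case: w {hg1 hg2} => ? ?; case: (f t) => ? ?; case: (g t) => ? ? /=.
ring.
Qed.

Lemma hdC_conj f t z : has_deriv_C f t z -> has_deriv_C (fun s => cj (f s)) t (cj z).
Proof.
move=> [hf1 hf2]; split.
  have -> : (fun s => complex.Re (cj (f s))) = (fun s => complex.Re (f s)).
    by apply/funext => s; rewrite ?fctE /=; case: (f s).
  by move: hf1; case: z {hf2}.
have -> : (fun s => complex.Im (cj (f s))) = - (fun s => complex.Im (f s)).
  by apply/funext => s; rewrite ?fctE /=; case: (f s).
apply: (is_derive_eq (is_deriveN hf1)) || apply: (is_derive_eq (is_deriveN hf2)).
  by case: z {hf1 hf2}.
Qed.

Lemma hdC_sum I (r : seq I) (F : I -> R -> C) (D : I -> C) t :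
  (forall i, has_deriv_C (F i) t (D i)) ->
  has_deriv_C (fun s => \sum_(i <- r) F i s) t (\sum_(i <- r) D i).
Proof.
move=> hF; elim: r => [|x r IH].
  have -> : (fun s => \sum_(i <- [::]) F i s) = (fun _ => 0) by apply/funext => s; rewrite big_nil.
  by rewrite big_nil; exact: hdC_cst.
have -> : (fun s => \sum_(i <- x :: r) F i s) = (fun s => F x s + \sum_(i <- r) F i s).
  by apply/funext => s; rewrite big_cons.
by rewrite big_cons; apply: hdC_add.
Qed.

Lemma hdC_frob m n (A B : R -> 'M[C]_(m, n)) t dA dB :
  has_deriv_mx A t dA -> has_deriv_mx B t dB ->
  has_deriv_C (fun s => frob (A s) (B s)) t (frob dA (B t) + frob (A t) dB).
Proof.
move=> hA hB.
have -> : (fun s => frob (A s) (B s)) = (fun s => \sum_k \sum_l cj (A s l k) * B s l k).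
  by apply/funext => s; rewrite frob_expand.
rewrite !frob_expand -big_split /=.
apply: hdC_sum => k; rewrite -big_split /=; apply: hdC_sum => l.
exact: hdC_mul (hdC_conj (hA l k)) (hB l k).
Qed.

End Der.


Lemma cRN (R : rcfType) (x : R) : - cR x = cR (- x).
Proof. by rewrite !cRE rmorphN. Qed.

Lemma sum_mulC (T : comNzRingType) (N : nat) (F G : 'I_N -> 'I_N -> T) :
  \sum_(i < N) \sum_(j < N) F i j * G i j = \sum_(i < N) \sum_(j < N) G i j * F i j.
Proof. by apply: eq_bigr => i _; apply: eq_bigr => j _; rewrite mulrC. Qed.

Lemma fn_sq (R : rcfType) (N m n : nat) (M : 'M[R[i]]_(m, n)) :
  frob_norm ((N%:R : R[i])^-1 *: M) ^+ 2 = ((N%:R : R) ^+ 2)^-1 * ssq M.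
Proof.
have hc : @conjc R ((N%:R : R[i])^-1) = (N%:R)^-1 by rewrite fmorphV rmorph_nat.
have e : frob ((N%:R : R[i])^-1 *: M) ((N%:R : R[i])^-1 *: M)
    = cR (((N%:R : R) ^+ 2)^-1 * ssq M).
  rewrite /frob cadjZ hc -scalemxAl -scalemxAr !mxtraceZ -/(frob M M) frob_self.
  by rewrite cRM cRV expr2 cRM cR_nat invfM mulrA.
rewrite /frob_norm e /= sqr_sqrtr // mulr_ge0 ?ssq_ge0 // invr_ge0 exprn_ge0 // ler0n.
Qed.
Lemma sum_fn_sq (R : rcfType) (N m n : nat) (F : 'I_N -> 'M[R[i]]_(m, n)) :
  \sum_(j < N) frob_norm ((N%:R : R[i])^-1 *: F j) ^+ 2
  = ((N%:R : R) ^+ 2)^-1 * \sum_(j < N) ssq (F j).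
Proof. by rewrite mulr_sumr; apply: eq_bigr => j _; exact: fn_sq. Qed.

Unset Implicit Arguments.
Set Strict Implicit.
Set Printing Implicit Defensive.

Theorem lemma3p1 (R : realType) (N d1 d2 d3 d4 : nat)
  (hN : (0 < N)%N) (hd1 : (0 < d1)%N) (hd2 : (0 < d2)%N)
  (hd3 : (0 < d3)%N) (hd4 : (0 < d4)%N)
  (k1 k2 : R) (hk1 : 0 <= k1) (hk2 : 0 <= k2)
  (a b : \bar R)
  (U : 'I_N -> R -> 'M[R[i]]_(d1, d2)) (V : 'I_N -> R -> 'M[R[i]]_(d3, d4))
  (hU : forall t : R, (a < t%:E < b)%E -> forall j : 'I_N,
     has_deriv_mx (U j) t
       ((cR k1 / N%:R) *: \sum_(k < N)
           (frob (V j t) (V k t) *: (U k t *m adj (U j t) *m U j t)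
            - frob (V k t) (V j t) *: (U j t *m adj (U k t) *m U j t))
      + (cR k2 / N%:R) *: \sum_(k < N)
           (frob (V j t) (V k t) *: (U j t *m adj (U j t) *m U k t)
            - frob (V k t) (V j t) *: (U j t *m adj (U k t) *m U j t))))
  (hV : forall t : R, (a < t%:E < b)%E -> forall j : 'I_N,
     has_deriv_mx (V j) t
       ((cR k1 / N%:R) *: \sum_(k < N)
           (frob (U j t) (U k t) *: (V k t *m adj (V j t) *m V j t)
            - frob (U k t) (U j t) *: (V j t *m adj (V k t) *m V j t))
      + (cR k2 / N%:R) *: \sum_(k < N)
           (frob (U j t) (U k t) *: (V j t *m adj (V j t) *m V k t)
            - frob (U k t) (U j t) *: (V j t *m adj (V k t) *m V j t)))) :
  let E := fun t : R => 1 - (N%:R ^+ 2)^-1 *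
      \sum_(i < N) \sum_(j < N) frob (U i t) (U j t) * frob (V i t) (V j t) in
  (forall t : R, (a < t%:E < b)%E ->
     has_deriv_C E t (cR (
         - (k1 / N%:R) * \sum_(j < N) frob_norm (N%:R^-1 *: \sum_(i < N)
              (frob (V j t) (V i t) *: (U i t *m adj (U j t))
               - frob (V i t) (V j t) *: (U j t *m adj (U i t)))) ^+ 2
         - (k1 / N%:R) * \sum_(j < N) frob_norm (N%:R^-1 *: \sum_(i < N)
              (frob (U j t) (U i t) *: (V i t *m adj (V j t))
               - frob (U i t) (U j t) *: (V j t *m adj (V i t)))) ^+ 2
         - (k2 / N%:R) * \sum_(j < N) frob_norm (N%:R^-1 *: \sum_(i < N)
              (frob (V j t) (V i t) *: (adj (U j t) *m U i t)
               - frob (V i t) (V j t) *: (adj (U i t) *m U j t))) ^+ 2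
         - (k2 / N%:R) * \sum_(j < N) frob_norm (N%:R^-1 *: \sum_(i < N)
              (frob (U j t) (U i t) *: (adj (V j t) *m V i t)
               - frob (U i t) (U j t) *: (adj (V i t) *m V j t))) ^+ 2)))
  /\
  (forall s t : R, (a < s%:E < b)%E -> (a < t%:E < b)%E -> s <= t ->
     complex.Re (E t) <= complex.Re (E s)).
Proof.
move=> E.
have hNR : (N%:R : R) != 0 by rewrite pnatr_eq0 -lt0n.
have hder : forall t : R, (a < t%:E < b)%E ->
     has_deriv_C E t (cR (
         - (k1 / N%:R) * \sum_(j < N) frob_norm (N%:R^-1 *: \sum_(i < N)
              (frob (V j t) (V i t) *: (U i t *m adj (U j t))
               - frob (V i t) (V j t) *: (U j t *m adj (U i t)))) ^+ 2
         - (k1 / N%:R) * \sum_(j < N) frob_norm (N%:R^-1 *: \sum_(i < N)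
              (frob (U j t) (U i t) *: (V i t *m adj (V j t))
               - frob (U i t) (U j t) *: (V j t *m adj (V i t)))) ^+ 2
         - (k2 / N%:R) * \sum_(j < N) frob_norm (N%:R^-1 *: \sum_(i < N)
              (frob (V j t) (V i t) *: (adj (U j t) *m U i t)
               - frob (V i t) (V j t) *: (adj (U i t) *m U j t))) ^+ 2
         - (k2 / N%:R) * \sum_(j < N) frob_norm (N%:R^-1 *: \sum_(i < N)
              (frob (U j t) (U i t) *: (adj (V j t) *m V i t)
               - frob (U i t) (U j t) *: (adj (V i t) *m V j t))) ^+ 2)).
  move=> t ht.
  have H1 i j := hdC_mul (hdC_frob (hU t ht i) (hU t ht j)) (hdC_frob (hV t ht i) (hV t ht j)).
  have H2 := hdC_sub (hdC_cst 1 t) (hdC_mul (hdC_cst ((N%:R ^+ 2 : R[i])^-1) t)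
      (hdC_sum (index_enum _) (fun i => hdC_sum (index_enum _) (H1 i)))).
  apply: (hdC_eq H2).
  rewrite sub0r mul0r add0r.
  have eU := @partU R N d1 d2 d3 d4 k1 k2 (fun i => U i t) (fun i => V i t) _ (fun j => erefl).
  have eV := @partU R N d3 d4 d1 d2 k1 k2 (fun i => V i t) (fun i => U i t) _ (fun j => erefl).
  cbv beta in eU; cbv beta in eV.
  under eq_bigr => i _ do rewrite big_split /=.
  rewrite big_split /= eU.
  rewrite (@sum_mulC _ N (fun i j => frob (U i t) (U j t))).
  rewrite eV.
  have hc : (N%:R ^- 2 : R[i]) = cR (N%:R ^- 2) by rewrite cRV expr2 cRM cR_nat.
  rewrite hc -cRD -cRM cRN; congr (cR _).
  rewrite !sum_fn_sq; ring.
split; first exact: hder.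
move=> s t hs ht hst.
have hin x : s <= x <= t -> (a < x%:E < b)%E.
  move=> /andP[h1 h2]; move/andP: hs => [hs1 hs2]; move/andP: ht => [ht1 ht2].
  apply/andP; split.
    by apply: (lt_le_trans hs1); rewrite lee_fin.
  by apply: (le_lt_trans _ ht2); rewrite lee_fin.
pose f := fun x => complex.Re (E x).
have hd x : s <= x <= t -> derivable f x 1.
  by move=> h; case: (hder x (hin x h)) => [[]].
have hdf : forall x, x \in `]s, t[%R -> derivable f x 1.
  by move=> x; rewrite in_itv /= => /andP[h1 h2]; apply: hd; rewrite !ltW.
have hdle : forall x, x \in `]s, t[%R -> derive1 f x <= 0.
  move=> x; rewrite in_itv /= => /andP[h1 h2].
  rewrite derive1E /f.
  have [[_ ->] _] := hder x (hin x (introT andP (conj (ltW h1) (ltW h2)))).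
  rewrite /= !mulNr -!opprD oppr_le0.
  by rewrite !addr_ge0 //; apply: mulr_ge0; (try by apply: divr_ge0 => //; exact: ler0n);
    apply: sumr_ge0 => j _; exact: sqr_ge0.
move: (@ler0_derive1_le_cc R f s t hdf hdle) => H.
apply: (H _ t s).
- apply: derivable_within_continuous => x; rewrite in_itv /= => hx; exact: hd.
- by rewrite in_itv /= lexx hst.
- by rewrite in_itv /= lexx hst.
- exact: hst.
Qed.
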